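(* Let $\mathbb{K}$ be a field, $R=\mathbb{K}\langle x,y\rangle/(xy-1)$, $I=\langle 1-yx\rangle$ the socle of $R$, and $S_n=Rf_n$ with $f_n=y^{n-1}x^{n-1}-y^nx^n$ for $n\ge1$. If $H$ is a left ideal of $R$, then either $H$ is semisimple (and so contained in $I$), or there is a unique monic polynomial $p(x)\in H\cap\mathbb{K}[x]$ of minimal degree (among nonzero polynomials in $x$ lying in $H$), and $H=\Sigma(H)\oplus Rp(x)$ for a uniquely determined left submodule $\Sigma(H)\subseteq S_1\oplus\cdots\oplus S_{\deg(p)}$.
   Context: $I=\bigoplus_{n\ge1}S_n$ as left modules, each $S_n$ being simple and isomorphic to $S_1$. *)

(* Defs.v *)
(* The Jacobson algebra R = K<x,y>/(xy-1) is modelled on its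
   K-basis { y^i x^j : i, j >= 0 }: an element sum_{i,j} c_ij y^i x^j is stored
   as the bivariate polynomial in {poly {poly K}} whose coefficient of
   'X^i (outer, the y-exponent) is the polynomial sum_j c_ij 'X^j (inner,
   the x-exponent). Addition is that of {poly {poly K}}; multiplication is
   jmul, determined by x^b y^c = x^(b-c) if b >= c, y^(c-b) otherwise, i.e.
   (y^a x^b)(y^c x^d) = y^(a + (c-b)_+) x^(d + (b-c)_+). *)
From HB Require Import structures.
From mathcomp Require Import all_boot all_order all_algebra.
Set Implicit Arguments. Unset Strict Implicit. Unset Printing Implicit Defensive.
Import Order.TTheory GRing.Theory Num.Theory.
Local Open Scope ring_scope.

Section Jacobson.
Variable K : fieldType.

Definition jac := {poly {poly K}}.

Definition jmono (i j : nat) : jac := ('X^j)%:P * 'X^i.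

Definition jmul (p q : jac) : jac :=
  \sum_(a < size p) \sum_(b < size p`_a) \sum_(c < size q) \sum_(d < size q`_c)
    ((p`_a`_b * q`_c`_d)%:P)%:P * jmono (a + (c - b)) (d + (b - c)).

Definition jx : jac := jmono 0 1.
Definition jy : jac := jmono 1 0.

Definition jpolx (p : {poly K}) : jac := p%:P.

Definition left_ideal (H : jac -> Prop) : Prop :=
  [/\ H 0, (forall u v, H u -> H v -> H (u + v))
    & (forall r h, H h -> H (jmul r h))].

Definition two_sided_ideal (H : jac -> Prop) : Prop :=
  left_ideal H /\ (forall h r, H h -> H (jmul h r)).

Definition socle_I (z : jac) : Prop :=
  forall J, two_sided_ideal J -> J (1 - jmono 1 1) -> J z.

Definition jf (n : nat) : jac := jmono n.-1 n.-1 - jmono n n.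

Definition S_upto (d : nat) (z : jac) : Prop :=
  exists r : nat -> jac, z = \sum_(n < d) jmul (r n) (jf n.+1).

Definition simple_left_ideal (L : jac -> Prop) : Prop :=
  [/\ left_ideal L, (exists z, L z /\ z <> 0) &
      forall L', left_ideal L' -> (forall z, L' z -> L z) ->
        (forall z, L' z -> z = 0) \/ (forall z, L z -> L' z)].

(* a left ideal is semisimple (as a left R-module) iff it is the sum of its
   simple submodules *)
Definition semisimple_left_ideal (H : jac -> Prop) : Prop :=
  left_ideal H /\
  forall h, H h -> exists (n : nat) (L : nat -> jac -> Prop) (z : nat -> jac),
    (forall i, (i < n)%N ->
       [/\ simple_left_ideal (L i), (forall w, L i w -> H w) & L i (z i)]) /\
    h = \sum_(i < n) z i.

Definition minpoly_in (H : jac -> Prop) (p : {poly K}) : Prop :=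
  [/\ p \is monic, H (jpolx p) &
      forall q : {poly K}, q != 0 -> H (jpolx q) -> (size p <= size q)%N].

Definition sigma_decomp (H : jac -> Prop) (p : {poly K}) (Sig : jac -> Prop) :=
  [/\ left_ideal Sig, (forall z, Sig z -> S_upto (size p).-1 z),
      (forall z, H z <-> exists s t, Sig s /\ z = s + jmul t (jpolx p)) &
      (forall s t, Sig s -> s = jmul t (jpolx p) -> s = 0)].

End Jacobson.

(* Main.v *)
Require Import Defs.
From HB Require Import structures.
From mathcomp Require Import all_boot all_order all_algebra.
From mathcomp Require Import zify ring.
From Stdlib Require Import Classical.
Set Implicit Arguments. Unset Strict Implicit. Unset Printing Implicit Defensive.
Import Order.TTheory GRing.Theory Num.Theory.
Local Open Scope ring_scope.

Section J.
Variable K : fieldType.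
Local Notation jac := (jac K).
Local Notation mono := (jmono K).
Implicit Types (p q z w h t s : jac).

Definition sc (c : K) (z : jac) : jac := c%:P%:P * z.

Definition Sg (z : jac) (F : nat -> nat -> jac) : jac :=
  \sum_(a < size z) \sum_(b < size z`_a) sc z`_a`_b (F a b).

Lemma sc0 z : sc 0 z = 0. Proof. by rewrite /sc !polyC0 mul0r. Qed.
Lemma scr0 c : sc c 0 = 0. Proof. by rewrite /sc mulr0. Qed.
Lemma scD c z w : sc c (z + w) = sc c z + sc c w. Proof. by rewrite /sc mulrDr. Qed.
Lemma scDl c d z : sc (c + d) z = sc c z + sc d z.
Proof. by rewrite /sc !polyCD mulrDl. Qed.
Lemma scM c d z : sc c (sc d z) = sc (c * d) z.
Proof. by rewrite /sc mulrA !polyCM. Qed.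
Lemma sc1 z : sc 1 z = z. Proof. by rewrite /sc !polyC1 mul1r. Qed.
Lemma sc_sum c I r (P : pred I) (F : I -> jac) :
  sc c (\sum_(i <- r | P i) F i) = \sum_(i <- r | P i) sc c (F i).
Proof. by rewrite /sc mulr_sumr. Qed.
Lemma scN c z : sc c (- z) = - sc c z. Proof. by rewrite /sc mulrN. Qed.
Lemma scNl c z : sc (- c) z = - sc c z. Proof. by rewrite /sc !polyCN mulNr. Qed.
Lemma coef_sc c z a b : (sc c z)`_a`_b = c * z`_a`_b.
Proof. by rewrite /sc coefCM coefCM. Qed.

Lemma widen0 (V : zmodType) n m (F : nat -> V) : (n <= m)%N ->
  (forall i, (n <= i)%N -> F i = 0) -> \sum_(i<n) F i = \sum_(i<m) F i.
Proof.
move=> nm F0; rewrite (big_ord_widen m F nm) big_mkcond /=.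
apply: eq_bigr => i _; case: ifP => // /negbT; rewrite -leqNgt => /F0 ->//.
Qed.

Definition bd (z : jac) : nat := (size z + \sum_(a < size z) size (z`_a)%R)%N.

Lemma bd_size (z : jac) : (size z <= bd z)%N. Proof. exact: leq_addr. Qed.
Lemma bd_coef (z : jac) (a : nat) : (size (z`_a)%R <= bd z)%N.
Proof.
case: (ltnP a (size z)) => ha; first last. by rewrite nth_default // size_poly0.
apply: leq_trans (leq_addl _ _).
by rewrite (bigD1 (Ordinal ha)) //= leq_addr.
Qed.

Lemma SgE z F N : (bd z <= N)%N ->
  Sg z F = \sum_(a<N) \sum_(b<N) sc z`_a`_b (F a b).
Proof.
move=> hN; rewrite /Sg.
transitivity (\sum_(a < size z) \sum_(b < N) sc z`_a`_b (F a b)).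
  apply: eq_bigr => a _.
  apply: (@widen0 _ _ _ (fun b => sc z`_a`_b (F a b))); first exact: leq_trans (bd_coef _ _) hN.
  by move=> i hi; rewrite nth_default // sc0.
apply: (@widen0 _ _ _ (fun a => \sum_(b < N) sc z`_a`_b (F a b))); first exact: leq_trans (bd_size _) hN.
move=> i hi; apply: big1 => b _; by rewrite (nth_default _ hi) coef0 sc0.
Qed.


Lemma sum_delta (V : zmodType) N a (G : V) : (a < N)%N ->
  \sum_(i < N) (if nat_of_ord i == a then G else 0) = G.
Proof.
move=> ha; rewrite (bigD1 (Ordinal ha)) //= eqxx big1 ?addr0 //.
by move=> i /negbTE; rewrite -val_eqE /= => ->.
Qed.

Lemma coef_mono i j a b : (mono i j)`_a`_b = ((a == i) && (b == j))%:R.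
Proof.
rewrite /jmono coefCM coefXn mulr_natr coefMn coefXn.
by case: (a == i); case: (b == j); rewrite /= ?mulr1n ?mulr0n ?mulr1 ?mulr0.
Qed.

Lemma Sg0 F : Sg 0 F = 0. Proof. by rewrite /Sg size_poly0 big_ord0. Qed.

Lemma SgD z w F : Sg (z + w) F = Sg z F + Sg w F.
Proof.
rewrite (@SgE z F (bd z + bd w + bd (z + w))) ?leq_addr ?leq_addl //;
  last by rewrite -addnA leq_addr.
rewrite (@SgE w F (bd z + bd w + bd (z + w))); last by rewrite -addnA addnC -addnA leq_addr.
rewrite (@SgE (z + w) F (bd z + bd w + bd (z + w))) ?leq_addl //.
rewrite -big_split; apply: eq_bigr => a _; rewrite -big_split; apply: eq_bigr => b _.
by rewrite coefD coefD scDl.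
Qed.

Lemma SgZ c z F : Sg (sc c z) F = sc c (Sg z F).
Proof.
rewrite (@SgE (sc c z) F (bd z + bd (sc c z))) ?leq_addl //.
rewrite (@SgE z F (bd z + bd (sc c z))) ?leq_addr //.
rewrite sc_sum; apply: eq_bigr => a _; rewrite sc_sum; apply: eq_bigr => b _.
by rewrite coef_sc scM.
Qed.

Lemma negsc (z : jac) : - z = sc (-1) z.
Proof. by rewrite scNl sc1. Qed.

Lemma SgN z F : Sg (- z) F = - Sg z F.
Proof. by rewrite negsc SgZ -negsc. Qed.

Lemma SgFD z F G : Sg z (fun a b => F a b + G a b) = Sg z F + Sg z G.
Proof.
rewrite /Sg -big_split; apply: eq_bigr => a _; rewrite -big_split.
by apply: eq_bigr => b _; rewrite scD.
Qed.

Lemma SgFZ c z F : Sg z (fun a b => sc c (F a b)) = sc c (Sg z F).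
Proof.
rewrite /Sg sc_sum; apply: eq_bigr => a _; rewrite sc_sum.
by apply: eq_bigr => b _; rewrite !scM mulrC.
Qed.

Lemma SgF0 z : Sg z (fun _ _ => 0) = 0.
Proof. by rewrite /Sg big1 // => a _; rewrite big1 // => b _; rewrite scr0. Qed.

Lemma SgF_sum z n (F : nat -> nat -> nat -> jac) :
  Sg z (fun a b => \sum_(i < n) F i a b) = \sum_(i < n) Sg z (F i).
Proof.
rewrite /Sg exchange_big; apply: eq_bigr => a _.
rewrite exchange_big; apply: eq_bigr => b _; exact: sc_sum.
Qed.

Lemma eq_Sg (z : jac) F G : (forall a b, (a < size z)%N -> (b < size (z`_a)%R)%N -> F a b = G a b) ->
  Sg z F = Sg z G.
Proof.
move=> h; apply: eq_bigr => a _; apply: eq_bigr => b _; by rewrite h.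
Qed.

Lemma Sg_lin (f : jac -> jac) z F :
  (forall x y, f (x + y) = f x + f y) -> (forall c x, f (sc c x) = sc c (f x)) ->
  f 0 = 0 -> f (Sg z F) = Sg z (fun a b => f (F a b)).
Proof.
move=> fD fZ f0; rewrite /Sg (big_morph f fD f0); apply: eq_bigr => a _.
rewrite (big_morph f fD f0); apply: eq_bigr => b _; exact: fZ.
Qed.

Lemma Sg_delta z i j G :
  Sg z (fun a b => if (a == i) && (b == j) then G else 0) = sc z`_i`_j G.
Proof.
rewrite (@SgE _ _ (bd z + i.+1 + j.+1)); last by rewrite -addnA leq_addr.
transitivity (\sum_(a < bd z + i.+1 + j.+1)
  (if nat_of_ord a == i then sc z`_i`_j G else 0)); last first.
  by rewrite sum_delta //; lia.
apply: eq_bigr => a _; case: eqP => [->|_].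
  rewrite (eq_bigr (fun b : 'I__ => if nat_of_ord b == j then sc z`_i`_j G else 0)).
    by rewrite sum_delta // ltn_addl.
  by move=> b _ /=; case: eqP => [->|]; rewrite ?scr0.
by apply: big1 => b _; rewrite /= scr0.
Qed.

Lemma Sg_mono i j F : Sg (mono i j) F = F i j.
Proof.
have -> : Sg (mono i j) F =
  Sg (mono i j) (fun a b => if (a == i) && (b == j) then F i j else 0).
  rewrite !(@SgE _ _ (bd (mono i j))) //; apply: eq_bigr => a _; apply: eq_bigr => b _.
  by rewrite coef_mono; case: eqP => [->|]; case: eqP => [->|] //= *; rewrite ?sc1 ?sc0.
by rewrite Sg_delta coef_mono !eqxx sc1.
Qed.

Lemma Sg_expand (z : jac) : Sg z mono = z.
Proof.
apply/polyP => a; apply/polyP => b.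
rewrite (@SgE _ _ (bd z + a.+1 + b.+1)); last by rewrite -addnA leq_addr.
rewrite !coef_sum.
transitivity (\sum_(a' < bd z + a.+1 + b.+1)
  (if nat_of_ord a' == a then z`_a`_b else 0)); last by rewrite sum_delta //; lia.
apply: eq_bigr => a' _; rewrite !coef_sum.
case: eqP => [->|na].
  rewrite (eq_bigr (fun b' : 'I__ => if nat_of_ord b' == b then z`_a`_b else 0)).
    by rewrite sum_delta //; lia.
  move=> b' _; rewrite coef_sc coef_mono eqxx /=.
  case: eqP => [hb|hb] /=; first by rewrite -hb eqxx mulr1.
  by rewrite mulr0; case: eqP => // hb'; case: hb.
apply: big1 => b' _; rewrite coef_sc coef_mono.
by move/eqP: na; rewrite eq_sym => /negbTE ->; rewrite /= mulr0.
Qed.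


Lemma jmulE (p q : jac) :
  jmul p q = Sg p (fun a b => Sg q (fun c d => mono (a + (c - b)) (d + (b - c)))).
Proof.
rewrite /jmul /Sg; apply: eq_bigr => a _; apply: eq_bigr => b _.
rewrite sc_sum; apply: eq_bigr => c _; rewrite sc_sum; apply: eq_bigr => d _.
by rewrite scM.
Qed.

Lemma jmulDl p p' q : jmul (p + p') q = jmul p q + jmul p' q.
Proof. by rewrite !jmulE SgD. Qed.
Lemma jmulZl c p q : jmul (sc c p) q = sc c (jmul p q).
Proof. by rewrite !jmulE SgZ. Qed.
Lemma jmul0l q : jmul 0 q = 0.
Proof. by rewrite jmulE Sg0. Qed.
Lemma jmulDr p q q' : jmul p (q + q') = jmul p q + jmul p q'.
Proof.
rewrite !jmulE -SgFD; apply: eq_Sg => a b _ _; exact: SgD.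
Qed.
Lemma jmulZr c p q : jmul p (sc c q) = sc c (jmul p q).
Proof.
rewrite !jmulE -SgFZ; apply: eq_Sg => a b _ _; exact: SgZ.
Qed.
Lemma jmul0r p : jmul p 0 = 0.
Proof.
rewrite jmulE (eq_Sg (G := fun _ _ => 0)) ?SgF0 // => a b _ _; exact: Sg0.
Qed.
Lemma jmulNl p q : jmul (- p) q = - jmul p q.
Proof. by rewrite !negsc jmulZl. Qed.
Lemma jmulNr p q : jmul p (- q) = - jmul p q.
Proof. by rewrite !negsc jmulZr. Qed.
Lemma jmulBl p p' q : jmul (p - p') q = jmul p q - jmul p' q.
Proof. by rewrite jmulDl jmulNl. Qed.
Lemma jmulBr p q q' : jmul p (q - q') = jmul p q - jmul p q'.
Proof. by rewrite jmulDr jmulNr. Qed.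

Lemma jmul_mono a b c d : jmul (mono a b) (mono c d) = mono (a + (c - b)) (d + (b - c)).
Proof. by rewrite jmulE !Sg_mono. Qed.

Lemma jmul_suml I r (P : pred I) (F : I -> jac) q :
  jmul (\sum_(i <- r | P i) F i) q = \sum_(i <- r | P i) jmul (F i) q.
Proof. exact: (big_morph (fun x => jmul x q) (fun x y => jmulDl x y q) (jmul0l q)). Qed.
Lemma jmul_sumr I r (P : pred I) (F : I -> jac) p :
  jmul p (\sum_(i <- r | P i) F i) = \sum_(i <- r | P i) jmul p (F i).
Proof. exact: (big_morph (fun x => jmul p x) (fun x y => jmulDr p x y) (jmul0r p)). Qed.

Lemma mono00 : mono 0 0 = 1.
Proof. by rewrite /jmono !expr0 mulr1. Qed.

Lemma jmul1l z : jmul 1 z = z.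
Proof.
rewrite -mono00 jmulE Sg_mono -[RHS]Sg_expand; apply: eq_Sg => a b _ _.
by congr (mono _ _); lia.
Qed.

Lemma jmul_expl p q : jmul p q = Sg p (fun a b => jmul (mono a b) q).
Proof.
rewrite -{1}(Sg_expand p); apply: (Sg_lin (f := fun x => jmul x q)).
- by move=> x y; rewrite jmulDl.
- by move=> c x; rewrite jmulZl.
- exact: jmul0l.
Qed.
Lemma jmul_expr p q : jmul p q = Sg q (fun c d => jmul p (mono c d)).
Proof.
rewrite -{1}(Sg_expand q); apply: (Sg_lin (f := fun x => jmul p x)).
- by move=> x y; rewrite jmulDr.
- by move=> c x; rewrite jmulZr.
- exact: jmul0r.
Qed.

Lemma jmulA p q (r : jac) : jmul (jmul p q) r = jmul p (jmul q r).
Proof.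
have -> : jmul (jmul p q) r = Sg p (fun a b => jmul (jmul (mono a b) q) r).
  rewrite -{1}(Sg_expand p); apply: (Sg_lin (f := fun x => jmul (jmul x q) r)).
  - by move=> x y; rewrite jmulDl jmulDl.
  - by move=> c x; rewrite !jmulZl.
  - by rewrite !jmul0l.
rewrite [RHS]jmul_expl; apply: eq_Sg => a b _ _.
have -> : jmul (jmul (mono a b) q) r = Sg q (fun c d => jmul (jmul (mono a b) (mono c d)) r).
  rewrite -{1}(Sg_expand q); apply: (Sg_lin (f := fun x => jmul (jmul (mono a b) x) r)).
  - by move=> x y; rewrite jmulDr jmulDl.
  - by move=> c x; rewrite jmulZr jmulZl.
  - by rewrite jmul0r jmul0l.
have -> : jmul (mono a b) (jmul q r) = Sg q (fun c d => jmul (mono a b) (jmul (mono c d) r)).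
  rewrite -{1}(Sg_expand q); apply: (Sg_lin (f := fun x => jmul (mono a b) (jmul x r))).
  - by move=> x y; rewrite jmulDl jmulDr.
  - by move=> c x; rewrite jmulZl jmulZr.
  - by rewrite jmul0l jmul0r.
apply: eq_Sg => c d _ _.
rewrite jmul_mono jmul_expr [jmul (mono c d) r]jmul_expr.
rewrite (Sg_lin (f := fun x => jmul (mono a b) x)); first last.
- exact: jmul0r.
- by move=> k x; rewrite jmulZr.
- by move=> x y; rewrite jmulDr.
apply: eq_Sg => e f _ _.
rewrite !jmul_mono; congr (mono _ _); lia.
Qed.


Lemma Sg_rmul z F w : Sg z F * w = Sg z (fun a b => F a b * w).
Proof.
apply: (Sg_lin (f := fun x => x * w)).
- by move=> x y; rewrite mulrDl.
- by move=> k x; rewrite /sc mulrA.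
- by rewrite mul0r.
Qed.

Definition cc : jac := 1 - 'X%:P * 'X.
Definition ee i j : jac := mono i j * cc.

Lemma eeE i j : ee i j = mono i j - mono i.+1 j.+1.
Proof.
rewrite /ee /cc /jmono mulrBr mulr1; congr (_ - _).
by rewrite !exprS mulrCA -!mulrA [_ * 'X]mulrC polyCM !mulrA.
Qed.

Lemma jmul_polx t (p : {poly K}) : jmul t (jpolx p) = t * p%:P.
Proof.
rewrite jmul_expl -{2}(Sg_expand t) Sg_rmul; apply: eq_Sg => a b _ _.
rewrite jmul_expr /jpolx -[X in _ = _ * X](Sg_expand p%:P) mulrC Sg_rmul.
apply: eq_Sg => c d hc _.
have c0 : c = 0%N by move: (leq_trans hc (size_polyC_leq1 p)); rewrite ltnS leqn0 => /eqP.
by rewrite c0 jmul_mono /jmono subn0 sub0n addn0 expr0 mulr1 mulrA -polyCM -exprD.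
Qed.

Lemma jpolxM (a b : {poly K}) : jmul (jpolx a) (jpolx b) = jpolx (a * b).
Proof. by rewrite jmul_polx /jpolx polyCM. Qed.

Lemma jmul_sc1 k z : jmul (sc k 1) z = sc k z.
Proof. by rewrite jmulZl jmul1l. Qed.

Lemma mono_ee a b k l :
  jmul (mono a b) (ee k l) = if (b <= k)%N then ee (a + (k - b)) l else 0.
Proof.
rewrite eeE jmulBr !jmul_mono; case: leqP => hb.
  rewrite eeE; have -> : (b - k = 0)%N by lia.
  have -> : (b - k.+1 = 0)%N by lia.
  have -> : (a + (k.+1 - b) = (a + (k - b)).+1)%N by lia.
  by rewrite !addn0.
have -> : (k - b = 0)%N by lia.
have -> : (k.+1 - b = 0)%N by lia.
have -> : (l.+1 + (b - k.+1) = l + (b - k))%N by lia.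
by rewrite subrr.
Qed.

Lemma jmul_ee i j k l : jmul (ee i j) (ee k l) = if j == k then ee i l else 0.
Proof.
rewrite {1}eeE jmulBl !mono_ee.
case: (ltngtP j k) => h.
- have -> : (i.+1 + (k - j.+1) = i + (k - j))%N by lia.
  by rewrite subrr.
- by rewrite subrr.
- by rewrite h subr0 subnn addn0.
Qed.

Lemma jmul_ee00 s : jmul s (ee 0 0) = Sg s (fun a b => if b == 0%N then ee a 0 else 0).
Proof.
rewrite jmul_expl; apply: eq_Sg => a b _ _; rewrite mono_ee leqn0.
by case: eqP => // ->; rewrite subn0 addn0.
Qed.

Definition colb d z := forall i, (size (z`_i)%R <= d)%N.

Lemma colb0 d : colb d 0. Proof. by move=> i; rewrite coef0 size_poly0. Qed.
Lemma colbD d z w : colb d z -> colb d w -> colb d (z + w).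
Proof.
move=> hz hw i; rewrite coefD; apply: leq_trans (size_polyD _ _) _.
by rewrite geq_max hz hw.
Qed.
Lemma colbZ d k z : colb d z -> colb d (sc k z).
Proof.
move=> hz i; rewrite /sc coefCM; apply: leq_trans (size_polyMleq _ _) _.
apply: leq_trans (hz i); rewrite size_polyC; case: (k != 0); lia.
Qed.
Lemma colbN d z : colb d z -> colb d (- z).
Proof. by move=> h; rewrite negsc; apply: colbZ. Qed.
Lemma colb_mono d i j : (j < d)%N -> colb d (mono i j).
Proof.
move=> hj a; rewrite /jmono coefCM coefXn mulr_natr.
case: (a == i); rewrite ?mulr1n ?mulr0n ?size_poly0 // size_polyXn //.
Qed.
Lemma colb_sum d I r (P : pred I) (F : I -> jac) :
  (forall i, P i -> colb d (F i)) -> colb d (\sum_(i <- r | P i) F i).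
Proof.
move=> h; elim/big_rec: _ => [|i x Pi hx]; first exact: colb0.
by apply: colbD => //; apply: h.
Qed.
Lemma colb_Sg d z F : (forall a b, colb d (F a b)) -> colb d (Sg z F).
Proof.
move=> h; apply: colb_sum => a _; apply: colb_sum => b _; exact/colbZ/h.
Qed.
Lemma colb_mono' d z (hz : colb d z) a b : (b < size (z`_a)%R)%N -> (b < d)%N.
Proof. by move=> hb; apply: leq_trans hb (hz a). Qed.

Lemma jf_ee n : jf K n.+1 = ee n n.
Proof. by rewrite eeE /jf. Qed.

Lemma S_upto_char d z : S_upto d z -> exists A, colb d A /\ z = A * cc.
Proof.
case=> r ->.
exists (\sum_(n < d) Sg (r n) (fun a b => if (b <= n)%N then mono (a + (n - b)) n else 0)).
split.
  apply: colb_sum => n _; apply: colb_Sg => a b; case: ifP => _; last exact: colb0.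
  by apply: colb_mono; apply: ltn_ord.
rewrite mulr_suml; apply: eq_bigr => n _; rewrite jf_ee jmul_expl Sg_rmul.
apply: eq_Sg => a b _ _; rewrite mono_ee; case: ifP => _; last by rewrite mul0r.
by [].
Qed.

Lemma S_upto_of d A : colb d A -> S_upto d (A * cc).
Proof.
move=> hA.
exists (fun n => Sg A (fun a b => if b == n then mono a n else 0)).
symmetry; transitivity (\sum_(n < d) Sg A (fun a b => if b == n then ee a n else 0)).
  apply: eq_bigr => n _; rewrite jf_ee.
  rewrite (Sg_lin (f := fun x => jmul x (ee n n))); first last.
  - exact: jmul0l.
  - by move=> k x; rewrite jmulZl.
  - by move=> x y; rewrite jmulDl.
  apply: eq_Sg => a b _ _; case: ifP => _; last by rewrite jmul0l.
  by rewrite mono_ee leqnn subnn addn0.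
rewrite -(SgF_sum A d (fun n a b => if b == n then ee a n else 0)) -[X in _ = X * _](Sg_expand A) Sg_rmul; apply: eq_Sg => a b _ hb.
have hbd := colb_mono' hA hb.
rewrite (eq_bigr (fun n : 'I_d => if nat_of_ord n == b then ee a b else 0)).
  by rewrite sum_delta.
by move=> n _; rewrite eq_sym; case: eqP => // ->.
Qed.

Lemma S_upto0 d : S_upto d (0 : jac).
Proof. by exists (fun _ => 0); rewrite big1 // => n _; rewrite jmul0l. Qed.
Lemma S_uptoD d z w : S_upto d z -> S_upto d w -> S_upto d (z + w).
Proof.
case=> r1 -> [r2 ->]; exists (fun n => r1 n + r2 n).
by rewrite -big_split; apply: eq_bigr => n _; rewrite jmulDl.
Qed.
Lemma S_uptoM d t z : S_upto d z -> S_upto d (jmul t z).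
Proof.
case=> r ->; exists (fun n => jmul t (r n)).
by rewrite jmul_sumr; apply: eq_bigr => n _; rewrite jmulA.
Qed.
Lemma S_uptoN d z : S_upto d z -> S_upto d (- z).
Proof. by move=> h; rewrite -[z]jmul1l -jmulNl; apply: S_uptoM. Qed.


Fixpoint Ph (h : jac) (i : nat) : {poly K} :=
  if i is i'.+1 then h`_i'.+1 + 'X * Ph h i' else h`_0.

Lemma PhE h i : Ph h i = \sum_(k < i.+1) h`_k * 'X^(i - k).
Proof.
elim: i => [|i IH] /=; first by rewrite big_ord1 subnn expr0 mulr1.
rewrite big_ord_recr /= subnn expr0 mulr1 addrC IH mulr_sumr; congr (_ + _).
apply: eq_bigr => k _; rewrite mulrCA -exprS; congr (_ * 'X^_).
have := ltn_ord k; lia.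
Qed.

Lemma Sg_polyC h (G : nat -> nat -> {poly K}) :
  Sg h (fun c d => (G c d)%:P) =
  (\sum_(c < size h) \sum_(d < size (h`_c)%R) h`_c`_d *: G c d)%:P.
Proof.
rewrite /Sg rmorph_sum; apply: eq_bigr => c _; rewrite rmorph_sum.
by apply: eq_bigr => d _; rewrite /sc -polyCM mul_polyC.
Qed.

Lemma xN h N : (size h <= N.+1)%N -> jmul (mono 0 N) h = jpolx (Ph h N).
Proof.
move=> hN; rewrite jmul_expr.
rewrite (eq_Sg (G := fun c d => ('X^d * 'X^(N - c))%:P)); last first.
  move=> c d hc _; rewrite jmul_mono /jmono add0n.
  have -> : (c - N = 0)%N by lia.
  by rewrite expr0 mulr1 exprD.
rewrite Sg_polyC /jpolx PhE; congr (_%:P).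
transitivity (\sum_(c < size h) h`_c * 'X^(N - c)).
  apply: eq_bigr => c _.
  rewrite (eq_bigr (fun d : 'I__ => (h`_c`_d *: 'X^d) * 'X^(N - c))); last first.
    by move=> d _; rewrite scalerAl.
  by rewrite -mulr_suml -poly_def coefK.
apply: (widen0 (F := fun c => h`_c * 'X^(N - c))) => // i hi.
by rewrite nth_default // mul0r.
Qed.


Definition prevU (U : nat -> {poly K}) i : {poly K} := if i is i'.+1 then 'X * U i' else 0.

Lemma decomp h (p : {poly K}) (U A : nat -> {poly K}) :
  (forall i, Ph h i = U i * p + A i) ->
  (forall i, (size h <= i.+1)%N -> A i = 0) ->
  (forall i, (size h <= i)%N -> U i = prevU U i) ->
  h - (\poly_(i < size h) (U i - prevU U i)) * p%:P = (\poly_(i < size h) A i) * cc.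
Proof.
move=> hP hA hU.
have Ai i : (\poly_(i < size h) A i)`_i = A i.
  rewrite coef_poly; case: ltnP => // hi; rewrite hA //; exact: leqW.
have Ti i : (\poly_(i < size h) (U i - prevU U i))`_i = U i - prevU U i.
  by rewrite coef_poly; case: ltnP => // hi; rewrite hU // subrr.
apply/polyP => i; rewrite /cc mulrBr mulr1 mulrA coefB coefB coefMX coefMC coefMC Ti Ai.
case: i => [|i] /=.
  rewrite subr0 /prevU subr0 -[h`_0]/(Ph h 0) hP. by rewrite addrC addKr.
have := hP i.+1; rewrite /= hP Ai => e.
have -> : h`_i.+1 = U i.+1 * p + A i.+1 - 'X * (U i * p + A i) by rewrite -e addrK.
rewrite /prevU; ring.
Qed.


Lemma small_mul (p a b : {poly K}) : p != 0 -> (size a <= (size p).-1)%N -> a = b * p -> a = 0.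
Proof.
move=> p0 ha e; case: (eqVneq b 0) => [b0|b0]; first by rewrite e b0 mul0r.
exfalso; move: ha; rewrite e size_mul //.
have hb : (0 < size b)%N by rewrite size_poly_gt0.
have hp : (0 < size p)%N by rewrite size_poly_gt0.
move: (size b) (size p) hb hp => x y. lia.
Qed.

Lemma rowarg (p : {poly K}) A t : p != 0 -> colb (size p).-1 A ->
  A * cc = t * p%:P -> A * cc = 0.
Proof.
move=> p0 hA e.
have ce i : (A * cc)`_i = A`_i - (if i is i'.+1 then A`_i' * 'X else 0).
  rewrite /cc mulrBr mulr1 mulrA coefB coefMX coefMC.
  by case: i.
have key i : A`_i = 0.
  elim: i => [|i IH].
    apply: (@small_mul p _ t`_0 p0 (hA 0%N)).
    by have := congr1 (fun z : jac => z`_0) e; rewrite ce coefMC subr0.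
  apply: (@small_mul p _ t`_i.+1 p0 (hA i.+1)).
  by have := congr1 (fun z : jac => z`_i.+1) e; rewrite ce coefMC IH mul0r subr0.
have -> : A = 0 by apply/polyP => i; rewrite key coef0.
by rewrite mul0r.
Qed.


Lemma eq_Sg_coef (z : jac) F G : (forall a b, z`_a`_b != 0 -> F a b = G a b) ->
  Sg z F = Sg z G.
Proof.
move=> h; apply: eq_bigr => a _; apply: eq_bigr => b _.
by case: (eqVneq z`_a`_b 0) => [->|/h ->]; rewrite ?sc0.
Qed.

Section Ideal.
Variable H : jac -> Prop.
Hypothesis hH : left_ideal H.

Lemma H0 : H 0. Proof. by case: hH. Qed.
Lemma HD z w : H z -> H w -> H (z + w). Proof. by case: hH => _ h _; apply: h. Qed.
Lemma HM r z : H z -> H (jmul r z). Proof. by case: hH => _ _ h; apply: h. Qed.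
Lemma HN z : H z -> H (- z).
Proof. by move=> hz; rewrite -[z]jmul1l -jmulNl; apply: HM. Qed.
Lemma HB z w : H z -> H w -> H (z - w).
Proof. by move=> hz hw; apply: HD => //; apply: HN. Qed.
Lemma Hsc k z : H z -> H (sc k z).
Proof. by move=> hz; rewrite -jmul_sc1; apply: HM. Qed.

Lemma H_Ph h i : H h -> (size h <= i.+1)%N -> H (jpolx (Ph h i)).
Proof. by move=> hh hi; rewrite -xN //; apply: HM. Qed.

Lemma min_dvd (p q : {poly K}) : minpoly_in H p -> H (jpolx q) -> q %% p = 0.
Proof.
case=> pm hp hmin hq.
have p0 : p != 0 := monic_neq0 pm.
have hr : H (jpolx (q %% p)).
  have -> : jpolx (q %% p) = jpolx q - jmul (jpolx (q %/ p)) (jpolx p).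
    by rewrite jpolxM {2}(divp_eq q p) /jpolx polyCD addrC addKr.
  by apply: HB => //; apply: HM.
apply/eqP; apply: contraT => r0.
have h1 := hmin _ r0 hr; have h2 : (size (q %% p)%R < size p)%N by rewrite ltn_modp.
by move: h2; rewrite ltnNge h1.
Qed.

Lemma min_exists (q : {poly K}) : q != 0 -> H (jpolx q) -> exists p : {poly K}, minpoly_in H p.
Proof.
move: {2}(size q) (leqnn (size q)) => n; elim: n q => [|n IH] q.
  by rewrite leqn0 size_poly_eq0 => /eqP -> /eqP.
move=> hs q0 hq.
case: (classic (exists q' : {poly K}, [/\ q' != 0, H (jpolx q') & (size q' < size q)%N])).
  by case=> q' [q'0 hq' hlt]; apply: (IH q') => //; lia.
move=> hno.
have l0 : lead_coef q != 0 by rewrite lead_coef_eq0.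
exists ((lead_coef q)^-1 *: q); split.
- by rewrite monicE lead_coefZ mulVf.
- by rewrite /jpolx -mul_polyC polyCM; apply: Hsc.
- move=> q' q'0 hq'; rewrite size_scale ?invr_eq0 //.
  by rewrite leqNgt; apply/negP => hlt; apply: hno; exists q'.
Qed.

Lemma min_unique (p p' : {poly K}) : minpoly_in H p -> minpoly_in H p' -> p' = p.
Proof.
move=> hp hp'; case: (hp) => pm hpH hmin; case: (hp') => pm' hpH' hmin'.
have p0 := monic_neq0 pm; have p0' := monic_neq0 pm'.
have sz : size p = size p'.
  by apply/eqP; rewrite eqn_leq hmin // hmin'.
case: (eqVneq (p' - p) 0) => [e0|hd].
  by apply/eqP; rewrite -subr_eq0 e0.
exfalso.
have hH' : H (jpolx (p' - p)) by rewrite /jpolx polyCB; apply: HB.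
have hge := hmin _ hd hH'.
have hle : (size (p' - p)%R <= size p)%N.
  by apply: leq_trans (size_polyD _ _) _; rewrite size_polyN geq_max -sz leqnn.
have e : size (p' - p) = size p by apply/eqP; rewrite eqn_leq hle hge.
move/eqP: hd; apply; apply/eqP; rewrite -lead_coef_eq0 lead_coefE e coefB.
move: pm pm'; rewrite !monicE !lead_coefE sz => /eqP -> /eqP ->; by rewrite subrr.
Qed.

Lemma S_Rp_zero (p : {poly K}) s t : p != 0 -> S_upto (size p).-1 s -> s = jmul t (jpolx p) -> s = 0.
Proof.
move=> p0 hs e; have [A [hA eA]] := S_upto_char hs.
rewrite eA; apply: (rowarg p0 hA (t := t)); by rewrite -eA e jmul_polx.
Qed.

Lemma decompB (p : {poly K}) h : minpoly_in H p -> H h ->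
  exists t, S_upto (size p).-1 (h - jmul t (jpolx p)).
Proof.
move=> hp hh; have p0 := monic_neq0 (let: And3 a _ _ := hp in a).
pose U i := Ph h i %/ p; pose A i := Ph h i %% p.
have hA i : (size h <= i.+1)%N -> A i = 0.
  by move=> hi; apply: (min_dvd hp); apply: H_Ph.
have hU i : (size h <= i)%N -> U i = prevU U i.
  case: i => [|i] hi /=.
    rewrite /U /prevU /=; move: hi; rewrite leqn0 size_poly_eq0 => /eqP ->.
    by rewrite coef0 div0p.
  rewrite /U /prevU /= nth_default // add0r.
  have -> : Ph h i = Ph h i %/ p * p.
    by rewrite {1}(divp_eq (Ph h i) p) -/(A i) hA ?addr0 //; apply: ltnW.
  by rewrite mulrA !mulpK.
have := decomp (p := p) (U := U) (A := A) (fun i => divp_eq _ _) hA hU.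
move=> e; exists (\poly_(i < size h) (U i - prevU U i)).
rewrite jmul_polx e; apply: S_upto_of => i; rewrite coef_poly.
case: ifP => _; last by rewrite size_poly0.
have h2 : (size (Ph h i %% p)%R < size p)%N by rewrite ltn_modp.
by rewrite /A -ltnS (ltn_predK h2).
Qed.


Lemma caseA_form h : (forall q : {poly K}, H (jpolx q) -> q = 0) -> H h ->
  exists A, h = A * cc.
Proof.
move=> hno hh.
have h1 : forall i, Ph h i = (fun _ => 0 : {poly K}) i * 1 + Ph h i.
  by move=> i; rewrite mul0r add0r.
have h2 : forall i, (size h <= i.+1)%N -> Ph h i = 0.
  by move=> i hi; apply: hno; apply: H_Ph.
have h3 : forall i, (size h <= i)%N -> (fun _ => 0 : {poly K}) i = prevU (fun _ => 0) i.
  by move=> [|i] _ //=; rewrite /prevU mulr0.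
have := @decomp h 1 (fun _ => 0) (Ph h) h1 h2 h3.
have -> : \poly_(i < size h) (0 - prevU (fun _ : nat => 0 : {poly K}) i) = 0.
  apply/polyP => i; rewrite coef_poly coef0; case: ifP => // _.
  by case: i => [|i]; rewrite /prevU ?mulr0 subr0.
by rewrite mul0r subr0 => ->; eexists.
Qed.

End Ideal.

Lemma ee_gen a b : ee a b = jmul (mono a 0) (jmul (1 - mono 1 1) (mono 0 b)).
Proof.
rewrite jmulBl jmul1l jmul_mono jmulBr !jmul_mono eeE.
by congr (_ - _); congr (mono _ _); lia.
Qed.

Lemma Sg_ee (A : jac) : A * cc = Sg A ee.
Proof. by rewrite -{1}(Sg_expand A) Sg_rmul. Qed.

Lemma socle_of (A : jac) : socle_I (A * cc).
Proof.
move=> J [hl JR] J1; case: hl => J0 JD JM.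
rewrite Sg_ee; apply (big_ind J J0 JD) => a _; apply (big_ind J J0 JD) => b _.
rewrite -jmul_sc1; apply JM; rewrite ee_gen; apply JM; exact: JR.
Qed.

Lemma ee_sum (A : jac) N : (size A <= N)%N -> \sum_(i < N) jmul (ee i i) (A * cc) = A * cc.
Proof.
move=> hN.
have e i : jmul (ee i i) (A * cc) = Sg A (fun a b => if i == a then ee a b else 0).
  rewrite Sg_ee (Sg_lin (f := fun x => jmul (ee i i) x)); first last.
  - exact: jmul0r.
  - by move=> k x; rewrite jmulZr.
  - by move=> x y; rewrite jmulDr.
  apply: eq_Sg => a b _ _; rewrite jmul_ee; by case: eqP => [->|].
rewrite (eq_bigr (fun i : 'I_N => Sg A (fun a b => if nat_of_ord i == a then ee a b else 0))) //.
rewrite -(SgF_sum A N (fun i a b => if i == a then ee a b else 0)) Sg_ee.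
apply: eq_Sg => a b ha _; rewrite sum_delta //; exact: leq_trans ha hN.
Qed.



Lemma simple_L (w : jac) : w != 0 -> jmul (ee 0 0) w = w ->
  simple_left_ideal (fun v => exists s, v = jmul s w).
Proof.
move=> w0 ew; split.
- split.
  + by exists 0; rewrite jmul0l.
  + by move=> u v [s1 ->] [s2 ->]; exists (s1 + s2); rewrite jmulDl.
  + by move=> r h [s ->]; exists (jmul r s); rewrite jmulA.
- by exists w; split => //; [exists 1; rewrite jmul1l | apply/eqP].
move=> L' hL' sub.
case: (classic (exists u, L' u /\ u != 0)); last first.
  move=> hn; left => z hz; apply/eqP; apply: contraT => z0; by case: hn; exists z.
case=> u [hu u0]; right.
have [s hs] := sub u hu.
pose F := fun a b : nat => if b == 0%N then ee a 0 else 0.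
have eu : u = jmul (Sg s F) w by rewrite hs -{1}ew -jmulA jmul_ee00.
case: (classic (exists a, s`_a`_0 != 0)); last first.
  move=> hn; exfalso; move/eqP: u0; apply.
  rewrite eu (eq_Sg_coef (G := fun _ _ => 0)) ?SgF0 ?jmul0l //.
  move=> a b sab; rewrite /F; case: eqP => // b0; exfalso; apply: hn.
  by exists a; rewrite -b0.
case=> a sa0.
have key : jmul (ee 0 a) u = sc s`_a`_0 w.
  rewrite eu -jmulA.
  rewrite (Sg_lin (f := fun x => jmul (ee 0 a) x)); first last.
  - exact: jmul0r.
  - by move=> k x; rewrite jmulZr.
  - by move=> x y; rewrite jmulDr.
  rewrite (eq_Sg (G := fun a' b => if (a' == a) && (b == 0%N) then ee 0 0 else 0)).
    by rewrite Sg_delta jmulZl ew.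
  move=> a' b _ _; rewrite /F; case: (b =P 0%N) => [_|_]; last by rewrite jmul0r andbF.
  by rewrite jmul_ee andbT eq_sym; case: eqP.
have Lw : L' w.
  have -> : w = jmul (sc (s`_a`_0)^-1 (ee 0 a)) u by rewrite jmulZl key scM mulVf ?sc1.
  exact: (HM hL').
by move=> z [s' ->]; apply: (HM hL').
Qed.

Lemma ss_of H (hH : left_ideal H) (A : jac) : H (A * cc) ->
  exists (n : nat) (L : nat -> jac -> Prop) (z : nat -> jac),
    (forall i, (i < n)%N ->
       [/\ simple_left_ideal (L i), (forall w, L i w -> H w) & L i (z i)]) /\
    (A * cc = \sum_(i < n) z i).
Proof.
move=> hh; set h := A * cc in hh *.
pose w i := jmul (ee 0 i) h.
pose Li i := fun v => exists s, v = jmul s (w i).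
pose zz i := jmul (ee i 0) (w i).
have zzE i : zz i = jmul (ee i i) h by rewrite /zz /w -jmulA jmul_ee eqxx.
have hsum : h = \sum_(i < size A) zz i.
  by rewrite (eq_bigr (fun i : 'I__ => jmul (ee i i) h)) ?ee_sum // => i _; rewrite zzE.
have ew i : jmul (ee 0 0) (w i) = w i by rewrite /w -jmulA jmul_ee eqxx.
have sub i : forall v, Li i v -> H v by move=> v [s ->]; apply: (HM hH); apply: (HM hH).
case: (classic (exists i, (i < size A)%N /\ w i != 0)).
  case=> i0 [hi0 w0].
  exists (size A), (fun i => if w i == 0 then Li i0 else Li i), zz; split => // i hi.
  case: eqP => [wi0|/eqP wi0]; split.
  - exact: simple_L w0 (ew i0).
  - exact: sub.
  - by exists 0; rewrite /zz wi0 jmul0r jmul0l.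
  - exact: simple_L wi0 (ew i).
  - exact: sub.
  - by exists (ee i 0).
move=> hn; exists 0%N, (fun _ _ => True), (fun _ => 0); split => //.
rewrite big_ord0 hsum big1 // => i _; rewrite /zz.
case: (eqVneq (w i) 0) => [->|wi]; first by rewrite jmul0r.
by exfalso; apply: hn; exists i.
Qed.

End J.

Theorem theorem3 (K : fieldType) (H : jac K -> Prop) :
  left_ideal H ->
  (semisimple_left_ideal H /\ (forall z, H z -> socle_I z))
  \/
  (exists p : {poly K},
     [/\ minpoly_in H p,
         (forall p' : {poly K}, minpoly_in H p' -> p' = p) &
         exists Sig : jac K -> Prop,
           sigma_decomp H p Sig /\
           (forall Sig' : jac K -> Prop, sigma_decomp H p Sig' ->
              forall z, Sig' z <-> Sig z)]).
Proof.
move=> hH.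
case: (classic (exists q : {poly K}, q != 0 /\ H (jpolx q))) => [[q [q0 hq]]|hno].
  right; have [p hp] := min_exists hH q0 hq.
  have p0 : p != 0 by case: hp => pm _ _; exact: monic_neq0.
  have hpH : H (jpolx p) by case: hp.
  exists p; split => //.
    move=> p' hp'; exact (min_unique hH hp hp').
  exists (fun z => H z /\ S_upto (size p).-1 z); split.
    split.
    - split.
      + by split; [exact: H0 hH | exact: S_upto0].
      + by move=> u v [hu su] [hv sv]; split; [exact: HD | exact: S_uptoD].
      + by move=> r z [hz sz]; split; [exact: HM | exact: S_uptoM].
    - by move=> z [].
    - move=> z; split.
        move=> hz; have [t ht] := decompB hH hp hz.
        exists (z - jmul t (jpolx p)), t; split; last by rewrite subrK.
        by split => //; apply: (HB hH) => //; apply: (HM hH).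
      case=> s [t [[hs _] ->]]; apply: (HD hH) => //; exact: (HM hH).
    - by move=> s t [_ hs] e; exact: S_Rp_zero p0 hs e.
  move=> Sig' [hl hS hiff hinter] z; split.
    move=> hz; split; last exact: hS.
    by apply/hiff; exists z, 0; split => //; rewrite jmul0l addr0.
  case=> hz hsz; have [s [t [hs e]]] := (hiff z).1 hz.
  have st : S_upto (size p).-1 (jmul t (jpolx p)).
    have -> : jmul t (jpolx p) = z - s by rewrite e addrC addKr.
    by apply: S_uptoD => //; apply: S_uptoN; apply: hS.
  have := S_Rp_zero p0 st (erefl _); rewrite e => ->; by rewrite addr0.
left.
have hno' : forall q : {poly K}, H (jpolx q) -> q = 0.
  move=> q hq; apply/eqP; apply: contraT => q0; exfalso; apply: hno; by exists q.
split.
  split => // h hh; have [A eA] := caseA_form hH hno' hh.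
  by rewrite eA; apply: (ss_of hH); rewrite -eA.
by move=> z hz; have [A ->] := caseA_form hH hno' hz; exact: socle_of.
Qed.
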